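(* For every $-1\le j\le d-2$ and every $j$-cell $\rho$ of $T_{d,k}$ (for $j=-1$, $\rho=\emptyset$), the link $\mathrm{lk}_{T_{d,k}}(\rho)=\{\sigma\in T_{d,k}:\sigma\cap\rho=\emptyset,\ \sigma\cup\rho\in T_{d,k}\}$ is isomorphic, as a simplicial complex, to $T_{d-|\rho|,k}$.
   Context: For $d,k\ge1$, the $k$-regular $d$-dimensional arboreal complex $T_{d,k}$ is the simplicial complex obtained by starting from a single $d$-simplex $\mathcal T$, attaching to each of its $(d-1)$-faces $k-1$ new $d$-simplices each using a new vertex, and inductively attaching to each $(d-1)$-face created in the previous step $k-1$ new $d$-simplices each using a new vertex; $T_{d,k}$ is the union over all steps. *)

(* Defs.v *)
From mathcomp Require Import all_boot.
Set Implicit Arguments. Unset Strict Implicit. Unset Printing Implicit Defensive.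

(* ---------- Abstract simplicial complexes ----------
   A (possibly infinite) simplicial complex on a vertex type V is given by the
   predicate of its cells; a cell is written as a duplicate-free list of
   vertices (the order is irrelevant: all complexes below are closed under
   permutation). *)

Definition link (V : eqType) (K : seq V -> Prop) (r : seq V) : seq V -> Prop :=
  fun s => (forall x, x \in s -> x \notin r) /\ K (s ++ r).

Definition sc_iso (V W : eqType) (K : seq V -> Prop) (L : seq W -> Prop) : Prop :=
  exists (f : V -> W) (g : W -> V),
    [/\ (forall x, K [:: x] -> L [:: f x] /\ g (f x) = x),
        (forall y, L [:: y] -> K [:: g y] /\ f (g y) = y),
        (forall s, K s -> L (map f s)) &
        (forall t, L t -> K (map g t))].

(* A d-simplex of T_{d,k} is encoded by the sequence of
   attachment moves leading to it from the initial simplex: the initial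
   simplex has vertices at "positions" 0..d; a move (i, c) (i <= d,
   c < k-1 the index of the copy among the k-1 new simplices) replaces the
   vertex at position i by a new vertex, i.e. attaches a new simplex along
   the (d-1)-face opposite to position i.  Faces created in the previous step
   are exactly those containing the newest vertex, so consecutive moves must
   use different positions. *)

Definition move := (nat * nat)%type.

Definition valid_path (d k : nat) (p : seq move) : bool :=
  all (fun m => (m.1 <= d) && (m.2 < k.-1)) p && sorted (fun a b => a.1 != b.1) p.

(* vertices: (i, [::]) is the i-th vertex of the initial simplex; (i, q) with
   q nonempty is the new vertex created by the last move of q (at position i) *)
Definition vertex := (nat * seq move)%type.

Definition vert (p : seq move) (i : nat) : vertex :=
  let n := size p - find (fun m : move => m.1 == i) (rev p) in
  (i, take n p).

Definition facet_verts (d : nat) (p : seq move) : seq vertex :=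
  [seq vert p i | i <- iota 0 d.+1].

Definition T (d k : nat) : seq vertex -> Prop :=
  fun s => uniq s /\ exists p, valid_path d k p /\ {subset s <= facet_verts d p}.

(* Main.v *)
Require Import Defs.
From mathcomp Require Import all_boot zify.
Set Implicit Arguments. Unset Strict Implicit. Unset Printing Implicit Defensive.

Notation Pi i := (fun m : move => m.1 == i).

Lemma vert1 p i : (vert p i).1 = i. Proof. by []. Qed.

Lemma vertE p i : vert p i = (i, (vert p i).2). Proof. by []. Qed.

Lemma vert_nil p i : ~~ has (Pi i) p -> (vert p i).2 = [::].
Proof.
rewrite /vert /= -has_rev has_find -leqNgt size_rev => h.
have : find (fun m : move => m.1 == i) (rev p) <= size p by rewrite -(size_rev p) find_size.
move=> h2; have -> : size p - find (fun m : move => m.1 == i) (rev p) = 0 by lia.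
by rewrite take0.
Qed.

Lemma vert_take p i : (vert p i).2 = take (size (vert p i).2) p.
Proof. by rewrite /= size_takel ?leq_subr. Qed.

Lemma vert_cat a b i : (vert (a ++ b) i).2 =
  if has (Pi i) b then a ++ (vert b i).2 else (vert a i).2.
Proof.
rewrite /vert /= rev_cat find_cat has_rev size_cat.
case: ifP => hb.
  have hf : find (fun m : move => m.1 == i) (rev b) < size b.
    by rewrite -(size_rev b) -has_find has_rev.
  rewrite take_cat ifN; last by lia.
  congr (_ ++ take _ _); lia.
have h2 : find (fun m : move => m.1 == i) (rev a) <= size a by rewrite -(size_rev a) find_size.
rewrite size_rev takel_cat; last by lia.
congr (take _ _); lia.
Qed.

Lemma vert_suffix p i : all (fun m : move => m.1 != i) (drop (size (vert p i).2) p).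
Proof.
rewrite /= size_takel ?leq_subr //.
have h2 : find (fun m : move => m.1 == i) (rev p) <= size p by rewrite -(size_rev p) find_size.
rewrite -[drop _ p]revK -take_rev all_rev.
elim: (rev p) => //= x s IH; case: ifP => //= ->; exact: IH.
Qed.

Lemma vert_last p i x0 : has (Pi i) p -> (last x0 (vert p i).2).1 = i.
Proof.
move=> hp.
have hf : find (fun m : move => m.1 == i) (rev p) < size p.
  by rewrite -(size_rev p) -has_find has_rev.
rewrite /= -nth_last size_takel ?leq_subr // nth_take; last by lia.
have /eqP hn := @nth_find _ x0 (Pi i) (rev p) ltac:(by rewrite has_rev).
rewrite nth_rev ?size_rev // in hn.
apply: etrans hn; congr (nth _ _ _).1; lia.
Qed.

Lemma vert_has p i : has (Pi i) p -> (vert p i).2 != [::].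
Proof.
move=> hp.
have hf : find (Pi i) (rev p) < size p by rewrite -(size_rev p) -has_find has_rev.
rewrite -size_eq0 /= size_takel ?leq_subr //; lia.
Qed.

Definition relab (h : nat -> nat) (p : seq move) : seq move :=
  map (fun m => (h m.1, m.2)) p.

Lemma vert_map (h : nat -> nat) p i :
  {in p, forall m : move, (h m.1 == h i) = (m.1 == i)} ->
  vert (relab h p) (h i) = (h i, relab h (vert p i).2).
Proof.
move=> hh; rewrite /vert /relab -map_rev find_map size_map /=.
rewrite (@eq_in_find _ _ (Pi i)); first by rewrite map_take.
by move=> m; rewrite mem_rev => /hh.
Qed.

Lemma facetP d p x : x \in facet_verts d p -> x = vert p x.1 /\ x.1 <= d.
Proof. by case/mapP=> i; rewrite mem_iota add0n ltnS => hi ->. Qed.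

Lemma vert_in_facet d p i : i <= d -> vert p i \in facet_verts d p.
Proof. by move=> hi; apply: map_f; rewrite mem_iota add0n ltnS. Qed.

Lemma facet_uniq d p s : uniq s -> {subset s <= facet_verts d p} -> uniq (map fst s).
Proof.
move=> us hs; rewrite map_inj_in_uniq // => x y /hs/facetP[hx _] /hs/facetP[hy _] e.
by rewrite hx hy e.
Qed.

Definition qstar (rho : seq vertex) : seq move :=
  foldr (fun x acc => if size acc < size x.2 then x.2 else acc) [::] rho.

Lemma qstar_max rho x : x \in rho -> size x.2 <= size (qstar rho).
Proof.
elim: rho => //= y rho IH; rewrite -/(qstar rho) inE => /orP[/eqP ->|/IH h];
  case: ltnP => //; lia.
Qed.

Lemma qstar_cases rho : qstar rho = [::] \/ exists2 x, x \in rho & qstar rho = x.2.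
Proof.
elim: rho => [|y rho IH] /=; first by left.
case: ifP => _; first by right; exists y; rewrite ?inE ?eqxx.
case: IH => [->|[x hx ->]]; first by left.
by right; exists x; rewrite // inE hx orbT.
Qed.

Lemma qstar_prefix d p rho : {subset rho <= facet_verts d p} ->
  p = qstar rho ++ drop (size (qstar rho)) p.
Proof.
move=> hs; case: (qstar_cases rho) => [->|[x hx ->]]; first by rewrite drop0.
have [e _] := facetP (hs _ hx).
have e2 : x.2 = take (size x.2) p by have := vert_take p x.1; rewrite -e.
by rewrite {1}e2 cat_take_drop.
Qed.

Lemma drop_avoid d p rho : {subset rho <= facet_verts d p} ->
  forall x, x \in rho -> all (fun m : move => m.1 != x.1) (drop (size (qstar rho)) p).
Proof.
move=> hs x hx; have [e _] := facetP (hs _ hx).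
have h := vert_suffix p x.1; rewrite -e in h.
apply/allP=> m hm; apply: (allP h).
have hle := qstar_max hx.
move: hm; rewrite -(subnK hle) -drop_drop; exact: mem_drop.
Qed.

Definition Spos (rho : seq vertex) : seq nat := map fst rho.
Definition Ppos d rho : seq nat := [seq i <- iota 0 d.+1 | i \notin Spos rho].
Definition sig d rho i := index i (Ppos d rho).
Definition tau d rho j := nth 0 (Ppos d rho) j.

Section Pos.
Lemma Ppos_uniq d rho : uniq (Ppos d rho).
Proof. by rewrite filter_uniq // iota_uniq. Qed.

Lemma mem_Ppos d rho i : (i \in Ppos d rho) = (i <= d) && (i \notin Spos rho).
Proof. by rewrite mem_filter mem_iota add0n ltnS andbC. Qed.

Lemma size_Ppos d rho : uniq (Spos rho) -> all (fun i => i <= d) (Spos rho) ->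
  size (Ppos d rho) = d.+1 - size rho.
Proof.
move=> us hs.
have hp : perm_eq [seq i <- iota 0 d.+1 | i \in Spos rho] (Spos rho).
  apply: uniq_perm; rewrite ?filter_uniq ?iota_uniq // => i.
  rewrite mem_filter mem_iota add0n ltnS; case: (boolP (i \in Spos rho)) => //= hi.
  by rewrite (allP hs).
have := count_predC (fun i => i \in Spos rho) (iota 0 d.+1).
rewrite size_iota -!size_filter (perm_size hp) /Spos size_map => e.
change (size rho + size (Ppos d rho) = d.+1) in e; lia.
Qed.
End Pos.

Lemma sig_lt d rho i : i \in Ppos d rho -> sig d rho i < size (Ppos d rho).
Proof. by rewrite /sig index_mem. Qed.

Lemma tau_in d rho j : j < size (Ppos d rho) -> tau d rho j \in Ppos d rho.
Proof. exact: mem_nth. Qed.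

Lemma tau_sig d rho i : i \in Ppos d rho -> tau d rho (sig d rho i) = i.
Proof. exact: nth_index. Qed.

Lemma sig_tau d rho j : j < size (Ppos d rho) -> sig d rho (tau d rho j) = j.
Proof. by move=> h; rewrite /sig /tau index_uniq // Ppos_uniq. Qed.

Lemma sig_eq d rho a b : a \in Ppos d rho -> b \in Ppos d rho ->
  (sig d rho a == sig d rho b) = (a == b).
Proof.
move=> ha hb; apply/eqP/eqP => [e|->] //.
by rewrite -(tau_sig ha) -(tau_sig hb) e.
Qed.

Lemma tau_eq d rho a b : a < size (Ppos d rho) -> b < size (Ppos d rho) ->
  (tau d rho a == tau d rho b) = (a == b).
Proof.
move=> ha hb; apply/eqP/eqP => [e|->] //.
by rewrite -(sig_tau ha) -(sig_tau hb) e.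
Qed.

Definition fmap d rho (x : vertex) : vertex :=
  (sig d rho x.1, relab (sig d rho) (drop (size (qstar rho)) x.2)).

Definition gmap d rho (y : vertex) : vertex :=
  if y.2 is [::] then vert (qstar rho) (tau d rho y.1)
  else (tau d rho y.1, qstar rho ++ relab (tau d rho) y.2).

Lemma fmap_vert d rho r i : i \in Ppos d rho ->
  all (fun m : move => m.1 \in Ppos d rho) r ->
  fmap d rho (vert (qstar rho ++ r) i) = vert (relab (sig d rho) r) (sig d rho i).
Proof.
move=> hi hr.
rewrite vert_map; last by move=> m hm; rewrite sig_eq // (allP hr).
rewrite /fmap vert1; congr (_, _); rewrite vert_cat.
case: ifP => hb; first by rewrite drop_size_cat.
rewrite [(vert r i).2]vert_nil ?hb // drop_oversize //.
by rewrite [X in size X <= _]vert_take size_take; case: ltnP => // /ltnW.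
Qed.

Lemma gmap_vert d rho t j : j < size (Ppos d rho) ->
  all (fun m : move => m.1 < size (Ppos d rho)) t ->
  gmap d rho (vert t j) = vert (qstar rho ++ relab (tau d rho) t) (tau d rho j).
Proof.
move=> hj ht.
have hh : has (Pi (tau d rho j)) (relab (tau d rho) t) = has (Pi j) t.
  rewrite has_map; apply: eq_in_has => m hm /=.
  by rewrite tau_eq // (allP ht).
rewrite [RHS]vertE vert_cat hh /gmap vert1.
case: ifP => hb.
  rewrite vert_map; last by move=> m hm; rewrite tau_eq // (allP ht).
  by have := vert_has hb; case: (vert t j).2.
by rewrite [(vert t j).2]vert_nil ?hb.
Qed.

Lemma relab_ts d rho r : all (fun m : move => m.1 \in Ppos d rho) r ->
  relab (tau d rho) (relab (sig d rho) r) = r.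
Proof.
move=> hr; rewrite /relab -map_comp; apply: map_id_in => m hm /=.
by rewrite tau_sig ?(allP hr) //; case: m hm.
Qed.

Lemma relab_st d rho r : all (fun m : move => m.1 < size (Ppos d rho)) r ->
  relab (sig d rho) (relab (tau d rho) r) = r.
Proof.
move=> hr; rewrite /relab -map_comp; apply: map_id_in => m hm /=.
by rewrite sig_tau ?(allP hr) //; case: m hm.
Qed.

Lemma L1 d k rho p s : valid_path d k p -> {subset s ++ rho <= facet_verts d p} ->
  (forall x, x \in s -> x \notin rho) ->
 [/\ p = qstar rho ++ drop (size (qstar rho)) p,
     all (fun m : move => m.1 \in Ppos d rho) (drop (size (qstar rho)) p)
   & forall x, x \in s -> x.1 \in Ppos d rho /\ x = vert p x.1].
Proof.
move=> /andP[hv _] hs hd.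
have hr : {subset rho <= facet_verts d p}.
  by move=> x hx; apply: hs; rewrite mem_cat hx orbT.
split; first exact: qstar_prefix hr.
  apply/allP => m hm; rewrite mem_Ppos.
  have /andP[-> _] /= := allP hv m (mem_drop hm).
  apply/mapP => -[x hx e].
  by have := allP (drop_avoid hr hx) m hm; rewrite e eqxx.
move=> x hx; have [e hxd] := facetP (hs x ltac:(by rewrite mem_cat hx)).
split => //; rewrite mem_Ppos hxd /=.
apply/mapP => -[y hy ey]; have [ey' _] := facetP (hr y hy).
have exy : x = y by rewrite e ey -ey'.
by have := hd x hx; rewrite exy hy.
Qed.

Lemma L2 d k rho p0 r : valid_path d k p0 -> {subset rho <= facet_verts d p0} ->
  all (fun m : move => (m.1 \in Ppos d rho) && (m.2 < k.-1)) r ->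
  sorted (fun a b : move => a.1 != b.1) r ->
  valid_path d k (qstar rho ++ r) /\ {subset rho <= facet_verts d (qstar rho ++ r)}.
Proof.
move=> hv0 hr0 har hsr.
have hq := qstar_prefix hr0.
have hdrop := drop_avoid hr0.
move: hv0 => /andP[hv0a hv0s].
have hra : forall m, m \in r -> m.1 \notin Spos rho.
  by move=> m hm; have /andP[+ _] := allP har m hm; rewrite mem_Ppos => /andP[].
split.
  rewrite /valid_path all_cat; apply/andP; split.
    apply/andP; split.
      by apply/allP => m hm; apply: (allP hv0a); rewrite hq mem_cat hm.
    apply/allP => m hm; have /andP[h1 ->] := allP har m hm; rewrite andbT.
    by move: h1; rewrite mem_Ppos => /andP[].
  case: (qstar_cases rho) => [->|[x hx eq]] //.
  move: hv0s; rewrite hq eq.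
  case e2 : x.2 => [|a q'] //=.
  rewrite !cat_path => /andP[-> _] /=.
  case: r har hsr hra => [|b r'] //= _ -> hra; rewrite andbT.
  have [ex _] := facetP (hr0 x hx).
  have hne : (vert p0 x.1).2 != [::] by rewrite -ex e2.
  have hh : has (Pi x.1) p0.
    by apply/negPn/negP => /vert_nil h; rewrite h in hne.
  have := vert_last a hh; rewrite -ex e2 /= => ->.
  apply/eqP => eb; have := hra b; rewrite inE eqxx -eb => /(_ isT).
  by rewrite map_f.
move=> y hy; have [e hyd] := facetP (hr0 y hy).
have h1 : ~~ has (Pi y.1) (drop (size (qstar rho)) p0).
  by rewrite -all_predC; exact: hdrop.
have h2 : ~~ has (Pi y.1) r.
  rewrite -all_predC; apply/allP => m hm /=; apply/eqP => em.
  by have := hra m hm; rewrite em map_f.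
have E : vert p0 y.1 = vert (qstar rho ++ r) y.1.
  by rewrite vertE [RHS]vertE {1}hq !vert_cat (negbTE h1) (negbTE h2).
by rewrite e E vert_in_facet.
Qed.

Unset Implicit Arguments.

Theorem proposition5 (d k : nat) (hd : 1 <= d) (hk : 1 <= k)
  (rho : seq vertex) (hrho : T d k rho) (hsz : size rho <= d.-1) :
  sc_iso (link (T d k) rho) (T (d - size rho) k).
Proof.
have [urho [p0 [hv0 hs0]]] := hrho.
have uS : uniq (Spos rho) := facet_uniq urho hs0.
have aS : all (fun i => i <= d) (Spos rho).
  by apply/allP => i /mapP[x hx ->]; have [_ ->] := facetP (hs0 x hx).
have hP : size (Ppos d rho) = (d - size rho).+1 by rewrite size_Ppos //; lia.
have D3 : forall s, link (T d k) rho s ->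
    T (d - size rho) k (map (fmap d rho) s) /\
    {in s, forall x, gmap d rho (fmap d rho x) = x}.
  move=> s [hdis [hu [p [hv hsp]]]].
  have [hp hra hx] := L1 hv hsp hdis.
  move: hp hra; set r := drop _ p => hp hra.
  have hra' : all (fun m : move => m.1 < size (Ppos d rho)) (relab (sig d rho) r).
    by rewrite all_map; apply/allP => m hm /=; apply: sig_lt; exact: (allP hra).
  have key : forall x, x \in s ->
      fmap d rho x = vert (relab (sig d rho) r) (sig d rho x.1) /\
      gmap d rho (fmap d rho x) = x.
    move=> x hxs; have [hxP ex] := hx x hxs.
    have fx : fmap d rho x = vert (relab (sig d rho) r) (sig d rho x.1).
      by rewrite {1}ex {1}hp fmap_vert.
    split => //; rewrite fx gmap_vert ?sig_lt // relab_ts // tau_sig //.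
    by rewrite -hp -ex.
  split; last by move=> x /key[].
  have us : uniq s by move: hu; rewrite cat_uniq => /and3P[].
  split.
    rewrite map_inj_in_uniq //; apply: (@can_in_inj _ _ _ _ (gmap d rho)).
    by move=> x /key[].
  exists (relab (sig d rho) r); split.
    move: hv => /andP[hva hvs]; apply/andP; split.
      rewrite all_map; apply/allP => m hm /=.
      have /andP[_ ->] := allP hva m (mem_drop hm).
      by have := sig_lt ((allP hra) m hm); rewrite hP ltnS => ->.
    rewrite sorted_map; move: hvs; rewrite hp => /cat_sorted2[_].
    apply: (sub_in_sorted (P := fun m : move => m.1 \in Ppos d rho)) => //.
    by move=> a b ha hb /=; rewrite sig_eq.
  move=> y /mapP[x hxs ->]; have [-> _] := key x hxs.
  apply: vert_in_facet; rewrite -ltnS -hP sig_lt //.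
  by have [] := hx x hxs.
have D4 : forall t, T (d - size rho) k t ->
    link (T d k) rho (map (gmap d rho) t) /\
    {in t, forall y, fmap d rho (gmap d rho y) = y}.
  move=> t [ut [p' [hv' hsp']]].
  move: hv' => /andP[hva' hvs'].
  set r := relab (tau d rho) p'.
  have hp1 : all (fun m : move => m.1 < size (Ppos d rho)) p'.
    by apply/allP => m hm; have /andP[+ _] := allP hva' m hm; rewrite hP ltnS.
  have har : all (fun m : move => (m.1 \in Ppos d rho) && (m.2 < k.-1)) r.
    rewrite all_map; apply/allP => m hm /=.
    have /andP[_ ->] := allP hva' m hm; rewrite andbT tau_in //.
    exact: (allP hp1).
  have har1 : all (fun m : move => m.1 \in Ppos d rho) r.
    by apply/allP => m /(allP har)/andP[].
  have hsr : sorted (fun a b : move => a.1 != b.1) r.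
    rewrite /r /relab sorted_map.
    apply: (sub_in_sorted _ hp1 hvs').
    by move=> a b ha hb /=; rewrite tau_eq.
  have [hv hsub] := L2 hv0 hs0 har hsr.
  have key : forall y, y \in t ->
      gmap d rho y = vert (qstar rho ++ r) (tau d rho y.1) /\
      y.1 < size (Ppos d rho) /\ fmap d rho (gmap d rho y) = y.
    move=> y hy; have [ey hyd] := facetP (hsp' y hy).
    have hj : y.1 < size (Ppos d rho) by rewrite hP ltnS.
    have gy : gmap d rho y = vert (qstar rho ++ r) (tau d rho y.1).
      by rewrite {1}ey gmap_vert.
    split => //; split => //.
    by rewrite gy fmap_vert ?tau_in // sig_tau // relab_st // -ey.
  split; last by move=> y /key[_ []].
  have hdis : forall x, x \in map (gmap d rho) t -> x \notin rho.
    move=> x /mapP[y hy ->]; have [-> [hj _]] := key y hy.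
    apply/negP => hin; have := tau_in hj; rewrite mem_Ppos => /andP[_].
    by rewrite (map_f fst hin).
  split => //; split.
    rewrite cat_uniq urho andbT; apply/andP; split.
      rewrite map_inj_in_uniq //; apply: (@can_in_inj _ _ _ _ (fmap d rho)).
      by move=> y /key[_ []].
    rewrite -all_predC; apply/allP => z hz /=; apply/negP => hzt.
    by have := hdis z hzt; rewrite hz.
  exists (qstar rho ++ r); split => // z; rewrite mem_cat => /orP[|/hsub //].
  move=> /mapP[y hy ->]; have [-> [hj _]] := key y hy.
  by apply: vert_in_facet; have := tau_in hj; rewrite mem_Ppos => /andP[].
exists (fmap d rho), (gmap d rho); split.
- move=> x hx; have [h1 h2] := D3 _ hx; split => //; exact: h2 (mem_head _ _).
- move=> y hy; have [h1 h2] := D4 _ hy; split => //; exact: h2 (mem_head _ _).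
- by move=> s /D3[].
- by move=> t /D4[].
Qed.
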